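(* Let $k$ be an algebraically closed field, $\mathbf{A}=\mathbf{A}_{\sigma'}$ an affine toric variety, $\mathbf{P}=\mathbf{P}_{\Sigma}$ a simplicial toric variety such that $m(\Sigma)$ is prime to the characteristic of $k$, and $\pi:\mathbf{P}\to\mathbf{A}$ an equivariant morphism. For integers $0\le r\le p$, the kernel of the wedge product homomorphism $$\omega^{r}_{\mathbf{P}/\mathbf{A}}(\log D)\otimes_{\mathcal{O}_{\mathbf{P}}}\widetilde{\omega}^{p-r}_{\mathbf{P}/\mathbf{A}}\to\omega^{p}_{\mathbf{P}/\mathbf{A}}(\log D),\quad\eta\otimes w\mapsto\eta\wedge w,$$ is contained in the kernel of $\Phi$.
   Context: $N$ free of finite rank with dual $M$, $\Sigma$ a finite fan in $N_{\mathbf{R}}$, $v_{\rho}$ primitive generator of $\rho\in\Sigma(1)$, $\chi^{u}$ characters. $\pi$ is induced by $\pi_{*}:N\to N'$ ($N'$ free, dual $M'$, $\pi^{*}$ dual) with $|\Sigma|\subset\pi_{*\mathbf{R}}^{-1}(\sigma')$. $m(\sigma)$ is the order of $(N\cap\sigma_{\mathbf{R}})/\sum_{\rho\in\sigma(1)}\mathbf{Z}v_{\rho}$, $m(\Sigma)=\prod_{\sigma}m(\sigma)$. $\Sigma_{\pi}(r)=\{\tau\in\Sigma(r)\mid\tau\subset\pi_{*\mathbf{R}}^{-1}(0)\}$, $D=\sum_{\rho\in\Sigma_{\pi}(1)}\mathbf{P}_{\rho}$. For $\tau\in\Sigma(r)$, $\mathbf{P}_{\tau}$ is the torus-invariant closed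 subvariety (toric variety of the quotient fan in $N/(N\cap\tau_{\mathbf{R}})$, dual lattice $M\cap\tau^{\perp}$), $\iota_{\tau}$ the closed immersion ($\chi^{u}\mapsto\chi^{u}_{\tau}$ if $u\in\tau^{\perp}$, else $0$); for $\tau\in\Sigma_{\pi}(r)$, $\pi\circ\iota_{\tau}$ is equivariant and $\widetilde{\omega}_{\mathbf{P}_{\tau}/\mathbf{A}}$ is defined for it as below. $M_{\pi,k}=\operatorname{coker}(k\otimes M'\to k\otimes M)$, pairing with $1\otimes v$ for $v\in\ker\pi_{*}$. With $j:\mathbf{P}^{\mathrm{reg}}\to\mathbf{P}$ the nonsingular locus: for a nonsingular $\sigma$ with $\mathbf{Z}$-basis $v_{1},\dots,v_{d}$ of $N$, $\sigma=\sum_{i\le c}\mathbf{R}_{\ge0}v_{i}$, $v_{1..l}\in\ker\pi_{*}$, $v_{l+1..c}\notin\ker\pi_{*}$, dual basis $u_{i}$, $x_{i}=\chi^{u_{i}}$, $\omega^{1}_{\mathbf{P}^{\mathrm{reg}}}$ is free on $dx_{1},\dots,dx_{l},dx_{l+1}/x_{l+1},\dots,dx_{d}/x_{d}$ inside $\mathcal{O}\otimes M$; $\omega^{1}_{\mathbf{P}^{\mathrm{reg}}/\mathbf{A}}=\operatorname{coker}(\mathcal{O}\otimes M'\to\omega^{1}_{\mathbf{P}^{\mathrm{reg}}})$, $\widetilde{\omega}^{p}_{\mathbf{P}/\mathbf{A}}=j_{*}\bigwedge^{p}\omega^{1}_{\mathbf{P}^{\mathrm{reg}}/\mathbf{A}}$,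 $\omega^{p}_{\mathbf{P}/\mathbf{A}}(\log D)=\mathcal{O}_{\mathbf{P}}\otimes_{k}\bigwedge^{p}M_{\pi,k}$. Concretely $\Gamma(\mathbf{A}_{\sigma},\widetilde{\omega}^{p}_{\mathbf{P}/\mathbf{A}})=\bigoplus_{u\in M\cap\sigma^{\vee}}\bigwedge^{p}H_{\sigma,u}\chi^{u}$ with $H_{\sigma,u}=\{w\in M_{\pi,k}\mid\langle w,1\otimes v_{\rho}\rangle=0$ for $\rho\in\Sigma_{\pi}(1)$, $\rho\subset\sigma$, $\langle u,v_{\rho}\rangle=0\}$. The map $\Phi$: for $\tau\in\Sigma_{\pi}(r)$ with ordered ray generators $v_{1},\dots,v_{r}$, let $\phi_{\tau}:\bigwedge^{r}M_{\pi,k}\to k$, $\eta_{1}\wedge\dots\wedge\eta_{r}\mapsto\det(\langle\eta_{i},1\otimes v_{j}\rangle)$. For $\sigma\supset\tau$, $\Phi_{\sigma,\tau}:\bigwedge^{r}M_{\pi,k}\otimes\bigoplus_{u\in M\cap\sigma^{\vee}}\bigwedge^{p-r}H_{\sigma,u}\chi^{u}\to\bigoplus_{u\in M\cap\sigma^{\vee}\cap\tau^{\perp}}\bigwedge^{p-r}H_{\sigma,u}\chi^{u}_{\tau}$ sends $\eta\otimes w\chi^{u}$ to $\phi_{\tau}(\eta)w\chi^{u}_{\tau}$ if $u\in\tau^{\perp}$ and to $0$ otherwise; identifying (as $m(\Sigma)$ is prime to $\operatorname{char}k$) $H_{\sigma,u}$ for $u\in\tau^{\perp}$ with the corresponding subspace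 of $(M\cap\tau^{\perp})_{\pi_{\tau},k}$, these give sheaf maps $\Phi_{\tau}:\omega^{r}_{\mathbf{P}/\mathbf{A}}(\log D)\otimes\widetilde{\omega}^{p-r}_{\mathbf{P}/\mathbf{A}}\to\iota_{\tau*}\widetilde{\omega}^{p-r}_{\mathbf{P}_{\tau}/\mathbf{A}}$, and $\Phi=\bigoplus_{\tau\in\Sigma_{\pi}(r)}\Phi_{\tau}$. *)

(* Defs.v *)
(* Chart-level (affine open A_sigma, degree u) rendering of
   Lemma 3.3. *)
From Stdlib Require List.
From HB Require Import structures.
From mathcomp Require Import all_boot all_order all_algebra.
Set Implicit Arguments. Unset Strict Implicit. Unset Printing Implicit Defensive.
Import Order.TTheory GRing.Theory Num.Theory.
Local Open Scope ring_scope.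

(* ---------- lattices: N = M = Z^d (row vectors), pairing = dot product ---- *)
Definition dotZ (d : nat) (u v : 'rV[int]_d) : int := \sum_i u 0 i * v 0 i.
Definition ratv (d : nat) (v : 'rV[int]_d) : 'rV[rat]_d := map_mx (fun z : int => z%:~R) v.

Definition in_cone (I : finType) (d : nat) (g : I -> 'rV[int]_d) (T : pred I)
    (x : 'rV[rat]_d) : Prop :=
  exists a : I -> rat, (forall i, 0 <= a i) /\ x = \sum_(i | T i) a i *: ratv (g i).

Definition lin_indep (I : finType) (d : nat) (g : I -> 'rV[int]_d) (T : pred I) : Prop :=
  forall a : I -> rat, \sum_(i | T i) a i *: ratv (g i) = 0 -> forall i, T i -> a i = 0.

Definition primitive (d : nat) (v : 'rV[int]_d) : Prop :=
  v != 0 /\ forall (c : int) (x : 'rV[int]_d), v = c *: x -> c = 1 \/ c = -1.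

(* A finite simplicial fan: rays indexed by 'I_n (primitive generators v_rho),
   cones = sets of ray indices. *)
Definition simplicial_fan (d n : nat) (rays : 'I_n -> 'rV[int]_d)
    (Sig : {set {set 'I_n}}) : Prop :=
  [/\ injective rays, (forall i, primitive (rays i)),
      (forall i, [set i] \in Sig),
      (forall S, S \in Sig -> lin_indep rays (mem S)) &
      ((forall S T : {set 'I_n}, S \in Sig -> T \subset S -> T \in Sig) /\
       (forall (S T : {set 'I_n}) x, S \in Sig -> T \in Sig ->
          in_cone rays (mem S) x -> in_cone rays (mem T) x ->
          in_cone rays (mem (S :&: T)) x))].

Definition strongly_convex (I : finType) (d : nat) (g : I -> 'rV[int]_d) : Prop :=
  forall x, in_cone g predT x -> in_cone g predT (- x) -> x = 0.

Definition in_span (d n : nat) (rays : 'I_n -> 'rV[int]_d) (S : {set 'I_n})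
    (x : 'rV[int]_d) : Prop :=
  exists a : 'I_n -> rat, ratv x = \sum_(i in S) a i *: ratv (rays i).
Definition congr_mod (d n : nat) (rays : 'I_n -> 'rV[int]_d) (S : {set 'I_n})
    (x y : 'rV[int]_d) : Prop :=
  exists a : 'I_n -> int, x - y = \sum_(i in S) a i *: rays i.

(* m = order of (N cap sigma_R) / sum_{rho in sigma(1)} Z v_rho *)
Definition is_index (d n : nat) (rays : 'I_n -> 'rV[int]_d) (S : {set 'I_n})
    (m : nat) : Prop :=
  exists reps : 'I_m -> 'rV[int]_d,
    [/\ (forall j, in_span rays S (reps j)),
        (forall j j', congr_mod rays S (reps j) (reps j') -> j = j') &
        (forall x, in_span rays S x -> exists j, congr_mod rays S x (reps j))].

Definition mSigma_prime_to_char (k : fieldType) (d n : nat)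
    (rays : 'I_n -> 'rV[int]_d) (Sig : {set {set 'I_n}}) : Prop :=
  exists mf : {set 'I_n} -> nat,
    (forall S, S \in Sig -> is_index rays S (mf S)) /\
    (forall p, p \in [pchar k] -> coprime p (\prod_(S in Sig) mf S)).

(* ---------- M_{pi,k} = coker (k (x) M' -> k (x) M), elements represented in k^d ---- *)
Definition pairk (k : fieldType) (d : nat) (w : 'rV[k]_d) (v : 'rV[int]_d) : k :=
  \sum_i w 0 i * (v 0 i)%:~R.

(* image of 1 (x) pi^* : k^{d'} -> k^d ; pi_* is v |-> v *m P *)
Definition imPi (k : fieldType) (d d' : nat) (P : 'M[int]_(d, d')) (w : 'rV[k]_d) : Prop :=
  exists u' : 'rV[k]_d', w = u' *m (map_mx (fun z : int => z%:~R) P)^T.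

(* H_{sigma,u} (as a set of representatives in k^d, it contains imPi) *)
Definition Hspace (k : fieldType) (d d' n : nat) (rays : 'I_n -> 'rV[int]_d)
    (P : 'M[int]_(d, d')) (S : {set 'I_n}) (u : 'rV[int]_d) (w : 'rV[k]_d) : Prop :=
  forall i, i \in S -> rays i *m P = 0 -> dotZ u (rays i) = 0 -> pairk w (rays i) = 0.

(* ---------- exterior powers via their universal property ----------------
   An alternating q-linear form on the space A / I0 (A a subspace of k^d
   containing I0): multilinear and alternating on A, vanishing if an argument
   lies in I0. *)
Definition upd (k : fieldType) (d q : nat) (x : 'I_q -> 'rV[k]_d) (i : 'I_q)
    (y : 'rV[k]_d) : 'I_q -> 'rV[k]_d := fun j => if j == i then y else x j.

Definition altform (k : fieldType) (d q : nat) (A I0 : 'rV[k]_d -> Prop)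
    (f : ('I_q -> 'rV[k]_d) -> k) : Prop :=
  [/\ (forall x i (a : k) y z, (forall j, j != i -> A (x j)) -> A y -> A z ->
          f (upd x i (a *: y + z)) = a * f (upd x i y) + f (upd x i z)),
      (forall x i j, i != j -> x i = x j -> (forall l, A (x l)) -> f x = 0) &
      (forall x i, (forall l, A (x l)) -> I0 (x i) -> f x = 0)].

(* a formal sum  sum c * x_1 /\ ... /\ x_q  is zero in  Lambda^q (A / I0) *)
Definition ext_zero (k : fieldType) (d q : nat) (A I0 : 'rV[k]_d -> Prop)
    (s : seq (k * ('I_q -> 'rV[k]_d))) : Prop :=
  forall f, altform A I0 f -> \sum_(x <- s) x.1 * f x.2 = 0.

(* element  sum c * (eta_1/\../\eta_r) (x) (w_1/\../\w_q)  of
   Lambda^r M_{pi,k} (x) Lambda^q H_{sigma,u}, given as a formal sum *)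
Definition tens (k : fieldType) (d r q : nat) :=
  seq (k * (('I_r -> 'rV[k]_d) * ('I_q -> 'rV[k]_d))).

Definition concat_tuple (k : fieldType) (d r q : nat) (eta : 'I_r -> 'rV[k]_d)
    (w : 'I_q -> 'rV[k]_d) : 'I_(r + q) -> 'rV[k]_d :=
  fun i => match split i with inl a => eta a | inr b => w b end.

Definition wedge (k : fieldType) (d r q : nat) (s : tens k d r q)
    : seq (k * ('I_(r + q) -> 'rV[k]_d)) :=
  map (fun x => (x.1, concat_tuple x.2.1 x.2.2)) s.

Definition phi_tau (k : fieldType) (d n r : nat) (rays : 'I_n -> 'rV[int]_d)
    (t : 'I_r -> 'I_n) (eta : 'I_r -> 'rV[k]_d) : k :=
  \det (\matrix_(i, j) pairk (eta i) (rays (t j))).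

Definition Phi (k : fieldType) (d n r q : nat) (rays : 'I_n -> 'rV[int]_d)
    (t : 'I_r -> 'I_n) (u : 'rV[int]_d) (s : tens k d r q)
    : seq (k * ('I_q -> 'rV[k]_d)) :=
  map (fun x => ((if [forall j, dotZ u (rays (t j)) == 0]
                  then phi_tau rays t x.2.1 else 0) * x.1, x.2.2)) s.

(* Main.v *)
Require Import Defs.
From Stdlib Require Import FunctionalExtensionality.
From Stdlib Require List.
From HB Require Import structures.
From mathcomp Require Import all_boot all_order all_algebra.
From mathcomp Require Import ring zify.
Set Implicit Arguments. Unset Strict Implicit. Unset Printing Implicit Defensive.
Import Order.TTheory GRing.Theory Num.Theory.
Local Open Scope ring_scope.

Section Gen.
Variables (k : fieldType) (V : lmodType k) (I0 : V -> Prop).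

Definition updn (x : nat -> V) (j : nat) (y : V) : nat -> V :=
  fun n => if n == j then y else x n.

Definition good (m : nat) (G : (nat -> V) -> k) : Prop :=
 [/\ (forall x j (a : k) y z, (j < m)%N ->
        G (updn x j (a *: y + z)) = a * G (updn x j y) + G (updn x j z)),
     (forall x j, (j.+1 < m)%N -> x j = x j.+1 -> G x = 0) &
     (forall x j, (j < m)%N -> I0 (x j) -> G x = 0)].

Lemma updnC x i j a b : i != j ->
  updn (updn x i a) j b = updn (updn x j b) i a.
Proof.
move=> nij; apply: functional_extensionality => n; rewrite /updn.
case: (eqVneq n i) => [->|ni].
  by rewrite (negbTE nij).
by case: (eqVneq n j).
Qed.

Lemma swap_good m G : good m G -> forall x j, (j.+1 < m)%N ->
  G x + G (fun n => if n == j then x j.+1 else if n == j.+1 then x j else x n) = 0.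
Proof.
case=> ML ADJ _ x j hj.
have hj' : (j < m)%N by lia.
have nj : (j == j.+1) = false by apply/eqP; lia.
have nj' : (j.+1 == j) = false by apply/eqP; lia.
pose B a b := G (updn (updn x j a) j.+1 b).
have B1 a b1 b2 : B a (b1 + b2) = B a b1 + B a b2.
  by have := ML (updn x j a) j.+1 1 b1 b2 hj; rewrite scale1r mul1r.
have B2 a1 a2 b : B (a1 + a2) b = B a1 b + B a2 b.
  rewrite /B !(@updnC x j j.+1) ?nj //.
  by have := ML (updn x j.+1 b) j 1 a1 a2 hj'; rewrite scale1r mul1r.
have B0 a : B a a = 0.
  apply: (ADJ _ j hj); by rewrite /updn eqxx nj eqxx.
have := B0 (x j + x j.+1); rewrite B1 !B2 !B0 add0r addr0.
have -> : B (x j) (x j.+1) = G x.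
  congr G; apply: functional_extensionality => n; rewrite /updn.
  case: (eqVneq n j.+1) => [->|h1]; first by rewrite ?eqxx ?nj ?nj'.
  rewrite ?(negbTE h1).
  by case: (eqVneq n j) => [->|]; rewrite ?eqxx ?nj ?nj'.
suff -> : B (x j.+1) (x j) =
   G (fun n => if n == j then x j.+1 else if n == j.+1 then x j else x n) by rewrite addrC.
congr G; apply: functional_extensionality => n; rewrite /updn.
case: (eqVneq n j.+1) => [->|h1]; first by rewrite ?eqxx ?nj ?nj'.
  rewrite ?(negbTE h1).
by case: (n == j).
Qed.

Lemma alt_good m G : good m G -> forall x i j, (i < j)%N -> (j < m)%N ->
  x i = x j -> G x = 0.
Proof.
move=> gG.
suff H : forall dd x i, (i + dd.+1 < m)%N -> x i = x (i + dd.+1)%N -> G x = 0.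
  move=> x i j hij hjm hx.
  have E : (i + (j - i).-1.+1 = j)%N by lia.
  by move: (H (j - i).-1 x i); rewrite E => /(_ hjm hx).
have [ML ADJ _] := gG.
elim=> [|dd IH] x i hm hx.
  by move: hm hx; rewrite addn1 => hm hx; apply: (ADJ x i).
have := swap_good gG x (j:=(i + dd.+1)%N); rewrite -addnS => /(_ hm).
move=> h.
suff h0 : G (fun n => if n == (i + dd.+1)%N then x (i + dd.+2)%N
   else if n == (i + dd.+2)%N then x (i + dd.+1)%N else x n) = 0.
  by rewrite h0 addr0 in h.
apply: (IH _ i); first by lia.
have -> : (i == i + dd.+1)%N = false by apply/eqP; lia.
have -> : (i == i + dd.+2)%N = false by apply/eqP; lia.
by rewrite eqxx.
Qed.

Definition wedge1 (l : V -> k) (G : (nat -> V) -> k) (m : nat) (x : nat -> V) : k :=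
  \sum_(0 <= i < m.+1) (-1) ^+ i * l (x i) * G (fun n => x (bump i n)).

Lemma bumpL i n : (i <= n)%N -> bump i n = n.+1.
Proof. by move=> h; rewrite /bump h add1n. Qed.
Lemma bumpR i n : (n < i)%N -> bump i n = n.
Proof. by move=> h; rewrite /bump leqNgt h add0n. Qed.

Lemma unbump_lt m i j : (i < m.+1)%N -> (j < m.+1)%N -> i != j -> (unbump i j < m)%N.
Proof.
move=> hi hj nij; rewrite /unbump; case: (ltnP i j) => h /=.
  by rewrite subn1; lia.
rewrite subn0; have : (j != i) by rewrite eq_sym.
move=> /negbTE; rewrite eqn_leq h /= => /negbT; rewrite -ltnNge; lia.
Qed.

Lemma updn_bump x i j w : i != j ->
  (fun n => updn x j w (bump i n)) = updn (fun n => x (bump i n)) (unbump i j) w.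
Proof.
move=> nij; apply: functional_extensionality => n; rewrite /updn.
have -> : (bump i n == j) = (n == unbump i j).
  apply/eqP/eqP => [<-|->]; first by rewrite bumpK.
  by rewrite unbumpK // inE eq_sym.
by [].
Qed.

Lemma good_wedge1 l G m :
  (forall a y z, l (a *: y + z) = a * l y + l z) ->
  (forall v, I0 v -> l v = 0) -> good m G -> good m.+1 (wedge1 l G m).
Proof.
move=> lin l0 gG; have [ML ADJ IZ] := gG; split.
- move=> x j a y z hj; rewrite /wedge1 big_distrr -big_split /=.
  apply: eq_big_nat => i /andP[_ hi].
  case: (eqVneq i j) => [->|nij].
    have E w : (fun n => updn x j w (bump j n)) = (fun n => x (bump j n)).
      apply: functional_extensionality => n; rewrite /updn.
      by have := neq_bump j n; rewrite eq_sym => /negbTE ->.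
    rewrite !E /updn eqxx lin; ring.
  rewrite !updn_bump // {1 3 5}/updn (negbTE nij).
  rewrite ML; last exact: unbump_lt.
  ring.
- move=> x j hj hx; rewrite /wedge1.
  rewrite (big_cat_nat _ (n:=j)) //=; last by lia.
  rewrite (@big_ltn _ _ _ j); last by lia.
  rewrite (@big_ltn _ _ _ j.+1); last by lia.
  rewrite big_nat big1; last first.
    move=> i /andP[_ hij]; rewrite (ADJ _ j.-1) ?mulr0 //; first by lia.
    rewrite bumpL; last by lia.
    rewrite bumpL; last by lia.
    by have -> : j.-1.+1 = j by lia.
  rewrite [X in _ + (_ + (_ + X))]big_nat big1; last first.
    move=> i /andP[hij him]; rewrite (ADJ _ j) ?mulr0 //; first by lia.
    by rewrite bumpR ?bumpR //; lia.
  have -> : (fun n => x (bump j.+1 n)) = (fun n => x (bump j n)).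
    apply: functional_extensionality => n.
    case: (ltngtP n j) => h.
    + by rewrite !bumpR //; lia.
    + by rewrite !bumpL //; lia.
    + by rewrite h bumpR // bumpL.
  rewrite -hx exprS; ring.
- move=> x j hj hx; rewrite /wedge1 big_nat big1 // => i /andP[_ hi].
  case: (eqVneq i j) => [->|nij]; first by rewrite l0 // mulr0 mul0r.
  rewrite (IZ _ (unbump i j)) ?mulr0 //; first exact: unbump_lt.
  by rewrite unbumpK // inE eq_sym.
Qed.

Fixpoint Wedge (q : nat) (ls : nat -> V -> k) (r : nat) (G : (nat -> V) -> k)
  : (nat -> V) -> k :=
  match r with
  | 0 => G
  | r'.+1 => wedge1 (ls 0%N) (Wedge q (fun n => ls n.+1) r' G) (r' + q)
  end.

Lemma good_Wedge q G r : good q G -> forall ls,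
  (forall a b y z, ls a (b *: y + z) = b * ls a y + ls a z) ->
  (forall a v, I0 v -> ls a v = 0) -> good (r + q) (Wedge q ls r G).
Proof.
move=> gG; elim: r => [|r IH] ls lin l0 //=.
rewrite addSn; apply: good_wedge1; [exact: (lin 0%N) | exact: (l0 0%N) | ].
apply: IH => [a|a]; [exact: (lin a.+1) | exact: (l0 a.+1)].
Qed.

Lemma Wedge_eval q G r : forall ls x,
  (forall a j, (a < r)%N -> (r <= j)%N -> (j < r + q)%N -> ls a (x j) = 0) ->
  Wedge q ls r G x = \det (\matrix_(a < r, b < r) ls a (x b)) * G (fun j => x (r + j)%N).
Proof.
elim: r => [|r IH] ls x hx /=.
  by rewrite det_mx00 mul1r.
rewrite /wedge1 (big_cat_nat _ (n:=r.+1)) //=; last by lia.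
rewrite [X in _ + X]big_nat [X in _ + X]big1; last first.
  by move=> i /andP[h1 h2]; rewrite hx ?mulr0 ?mul0r //; lia.
rewrite addr0 (expand_det_row _ ord0) mulr_suml big_mkord.
apply: eq_bigr => i _.
rewrite IH; last first.
  move=> a j ha hj hj'; rewrite bumpL; last by have := ltn_ord i; lia.
  by apply: hx; lia.
have -> : (fun j => x (bump i (r + j))) = (fun j => x (r.+1 + j)%N).
  apply: functional_extensionality => j; rewrite bumpL //.
  by have := ltn_ord i; lia.
rewrite /cofactor !mxE add0n.
have -> : row' ord0 (col' i (\matrix_(a < r.+1, b < r.+1) ls a (x b))) =
   \matrix_(a < r, b < r) ls a.+1 (x (bump i b)).
  by apply/matrixP => a b; rewrite !mxE.
ring.
Qed.

End Gen.
Section Concrete.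
Variables (k : fieldType) (d d' n : nat) (rays : 'I_n -> 'rV[int]_d) (P : 'M[int]_(d, d')).

Lemma pairk_lin (a : k) (y z : 'rV[k]_d) v :
  pairk (a *: y + z) v = a * pairk y v + pairk z v.
Proof.
rewrite /pairk big_distrr -big_split /=; apply: eq_bigr => i _; rewrite !mxE; ring.
Qed.

Lemma pairk_imPi (w : 'rV[k]_d) v : v *m P = 0 -> imPi P w -> pairk w v = 0.
Proof.
move=> vP [u' ->]; rewrite /pairk.
under eq_bigr do rewrite !mxE mulr_suml.
rewrite exchange_big /= big1 // => b _.
have : (v *m P) 0 b = 0 by rewrite vP mxE.
rewrite !mxE => h.
have -> : \sum_(i < d) u' 0 b * (map_mx (fun z : int => z%:~R) P)^T b i * (v 0 i)%:~R
   = u' 0 b * ((1 : k) *~ (\sum_(j < d) v 0 j * P j b)).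
  rewrite mulrz_sumr big_distrr; apply: eq_bigr => i _; rewrite !mxE.
  rewrite -mulrA; congr (_ * _); rewrite mulrC -intrM //.
by rewrite h mulr0.
Qed.

End Concrete.
Section HS.
Variables (k : fieldType) (d d' n : nat) (rays : 'I_n -> 'rV[int]_d) (P : 'M[int]_(d, d')).
Variables (S : {set 'I_n}) (u : 'rV[int]_d).

Definition Cset i := [&& i \in S, rays i *m P == 0 & dotZ u (rays i) == 0].
Definition Cm : 'M[k]_(d, n) := \matrix_(a, i) if Cset i then (rays i 0 a)%:~R else 0.

Lemma HspaceE (w : 'rV[k]_d) : Hspace rays P S u w <-> w *m Cm = 0.
Proof.
split.
  move=> hw; apply/rowP => i; rewrite !mxE.
  case hC: (Cset i).
    have /and3P[iS /eqP iP /eqP iu] := hC.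
    rewrite -[RHS](hw i iS iP iu) /pairk; apply: eq_bigr => a _; by rewrite !mxE hC.
  by rewrite big1 // => a _; rewrite mxE hC mulr0.
move=> h i iS iP iu.
have hC : Cset i by rewrite /Cset iS iP iu !eqxx.
have := congr1 (fun M : 'rV[k]_n => M 0 i) h; rewrite !mxE => <-.
by rewrite /pairk; apply: eq_bigr => a _; rewrite !mxE hC.
Qed.

Definition piH (v : 'rV[k]_d) := v *m proj_mx (kermx Cm) (kermx Cm)^C%MS.

Lemma piH_in v : Hspace rays P S u (piH v).
Proof. by apply/HspaceE; apply/eqP; rewrite -sub_kermx proj_mx_sub. Qed.

Lemma piH_id w : Hspace rays P S u w -> piH w = w.
Proof.
move=> /HspaceE h; apply: proj_mx_id; first exact: capmx_compl.
by rewrite sub_kermx h.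
Qed.

Lemma piH_lin a y z : piH (a *: y + z) = a *: piH y + piH z.
Proof. by rewrite /piH mulmxDl scalemxAl. Qed.

Lemma imPi_H (w : 'rV[k]_d) : imPi P w -> Hspace rays P S u w.
Proof. by move=> hw i _ iP _; exact: (pairk_imPi iP hw). Qed.

End HS.

Section MainS.
Variables (k : fieldType) (d d' n : nat) (rays : 'I_n -> 'rV[int]_d) (P : 'M[int]_(d, d')).
Variables (S : {set 'I_n}) (u : 'rV[int]_d) (r q : nat) (t : 'I_r -> 'I_n).
Hypothesis tS : forall j, t j \in S.
Hypothesis tP : forall j, rays (t j) *m P = 0.
Hypothesis tu : forall j, dotZ u (rays (t j)) = 0.
Variable f : ('I_q -> 'rV[k]_d) -> k.
Hypothesis falt : altform (Hspace rays P S u) (imPi P) f.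

Local Notation V := 'rV[k]_d.
Local Notation pH := (@piH k d d' n rays P S u).

Definition ls (m : nat) (w : V) : k :=
  oapp (fun a : 'I_r => pairk w (rays (t a))) 0 (insub m).
Definition Gf (x : nat -> V) : k := f (fun j : 'I_q => pH (x j)).
Definition ext (N : nat) (x : 'I_N -> V) (m : nat) : V := oapp x 0 (insub m).
Definition FF (x : 'I_(r + q) -> V) : k := Wedge q ls r Gf (ext x).

Lemma ls_lin a b y z : ls a (b *: y + z) = b * ls a y + ls a z.
Proof. rewrite /ls; case: insub => [c|] /=; [exact: pairk_lin | by rewrite mulr0 addr0]. Qed.

Lemma ls_I0 a v : imPi P v -> ls a v = 0.
Proof. rewrite /ls; case: insub => [c|] //= h; exact: pairk_imPi. Qed.

Lemma GfE x j w (hj : (j < q)%N) :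
  (fun l : 'I_q => pH (updn x j w l)) = upd (fun l => pH (x l)) (Ordinal hj) (pH w).
Proof.
apply: functional_extensionality => l; rewrite /upd /updn -val_eqE /=.
by case: eqP.
Qed.

Lemma Gf_good : good (imPi P) q Gf.
Proof.
have [ML ALT IZ] := falt.
split.
- move=> x j a y z hj; rewrite /Gf !GfE piH_lin ML //; by move=> *; apply: piH_in.
- move=> x j hj hx; rewrite /Gf.
  have hj' : (j < q)%N by lia.
  apply: (ALT _ (Ordinal hj') (Ordinal hj)); last by move=> l; apply: piH_in.
    by rewrite -val_eqE /=; apply/eqP; lia.
  by rewrite /= hx.
- move=> x j hj hx; rewrite /Gf; apply: (IZ _ (Ordinal hj)); first by move=> l; apply: piH_in.
  by rewrite /= piH_id //; apply: imPi_H.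
Qed.

Lemma insub_ord N m (h : (m < N)%N) : insub m = Some (Ordinal h) :> option 'I_N.
Proof. exact: (valK (Ordinal h)). Qed.

Lemma ext_ord N (x : 'I_N -> V) (i : 'I_N) : ext x i = x i.
Proof. by rewrite /ext valK. Qed.

Lemma ext_upd N (x : 'I_N -> V) i y : ext (upd x i y) = updn (ext x) i y.
Proof.
apply: functional_extensionality => m; rewrite /ext /upd /updn.
case: insubP => [l _ vl|hm] /=; first by rewrite -vl val_eqE.
have : m != i by apply: contraNneq hm => ->; exact: ltn_ord.
by move=> /negbTE ->.
Qed.

Lemma FF_alt : altform (fun _ => True) (imPi P) FF.
Proof.
have gW := good_Wedge r Gf_good ls_lin ls_I0.
have [ML _ IZ] := gW.
split.
- by move=> x i a y z _ _ _; rewrite /FF !ext_upd ML.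
- move=> x i j nij xij _; rewrite /FF.
  have e : ext x i = ext x j by rewrite !ext_ord.
  case: (ltngtP i j) => h.
  + exact: (alt_good gW h).
  + exact: (alt_good gW h (ltn_ord i) (esym e)).
  + by move: nij; rewrite (ord_inj h) eqxx.
- by move=> x i _ hx; rewrite /FF (IZ _ i) // ext_ord.
Qed.

Lemma ext_concat1 (eta : 'I_r -> V) (w : 'I_q -> V) (b : 'I_r) :
  ext (concat_tuple eta w) b = eta b.
Proof.
have hb : (b < r + q)%N by apply: ltn_addr.
rewrite /ext (insub_ord hb) /= /concat_tuple.
case: splitP => [a ha|c hc] /=.
  by congr eta; apply: val_inj.
by move: hc; rewrite /= => hc; have := ltn_ord b; lia.
Qed.

Lemma ext_concat2 (eta : 'I_r -> V) (w : 'I_q -> V) (b : 'I_q) :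
  ext (concat_tuple eta w) (r + b)%N = w b.
Proof.
have hb : (r + b < r + q)%N by rewrite ltn_add2l.
rewrite /ext (insub_ord hb) /= /concat_tuple.
case: splitP => [a ha|c hc] /=.
  by move: ha; rewrite /= => ha; have := ltn_ord a; lia.
by congr w; apply: val_inj; move: hc; rewrite /= => hc; lia.
Qed.

Lemma FF_concat (eta : 'I_r -> V) (w : 'I_q -> V) :
  (forall j, Hspace rays P S u (w j)) ->
  FF (concat_tuple eta w) = phi_tau rays t eta * f w.
Proof.
move=> hw; rewrite /FF Wedge_eval; last first.
  move=> a j ha hj hj'.
  have hjr : (j - r < q)%N by lia.
  have -> : j = (r + Ordinal hjr)%N by rewrite /=; lia.
  rewrite ext_concat2 /ls (insub_ord ha) /=.
  apply: hw; by [apply: tS | apply: tP | apply: tu].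
rewrite /phi_tau -(det_tr (\matrix_(i, j) pairk (eta i) (rays (t j)))); congr (\det _ * _).
  apply/matrixP => a b; rewrite !mxE ext_concat1 /ls.
  by rewrite (insub_ord (ltn_ord a)) /=; congr (pairk _ (rays (t _))); apply: val_inj.
rewrite /Gf; congr f; apply: functional_extensionality => l.
by rewrite ext_concat2 piH_id.
Qed.

End MainS.

Theorem lemma3p3 (k : closedFieldType) (d d' n n' : nat)
    (rays : 'I_n -> 'rV[int]_d) (Sig : {set {set 'I_n}})
    (g : 'I_n' -> 'rV[int]_d') (P : 'M[int]_(d, d')) (r q : nat) :
  simplicial_fan rays Sig ->
  strongly_convex g ->
  (forall i, in_cone g predT (ratv (rays i *m P))) ->
  mSigma_prime_to_char k rays Sig ->
  forall (S : {set 'I_n}) (u : 'rV[int]_d) (s : tens k d r q),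
    S \in Sig ->
    (forall i, i \in S -> 0 <= dotZ u (rays i)) ->
    (forall x, List.In x s -> forall j, Hspace rays P S u (x.2.2 j)) ->
    ext_zero (fun _ => True) (imPi P) (wedge s) ->
    forall t : 'I_r -> 'I_n,
      injective t ->
      [set t j | j : 'I_r] \in Sig ->
      [set t j | j : 'I_r] \subset S ->
      (forall j, rays (t j) *m P = 0) ->
      ext_zero (Hspace rays P S u) (imPi P) (Phi rays t u s).
Proof.
move=> _ _ _ _ S u s _ _ Hs Hz t _ _ tS tP f falt.
rewrite /Phi big_map.
case: (boolP [forall j, dotZ u (rays (t j)) == 0]) => cond; last first.
  by rewrite big1 // => x _; rewrite /= !mul0r.
have tS' : forall j, t j \in S.
  by move=> j; apply: (subsetP tS); apply/imsetP; exists j.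
have tu : forall j, dotZ u (rays (t j)) = 0 by move=> j; apply/eqP; exact: (forallP cond j).
have := Hz _ (FF_alt tP falt); rewrite /wedge big_map => H0; apply: (etrans _ H0).
clear H0; elim: s Hs {Hz} => [|x s IH] Hs; first by rewrite !big_nil.
rewrite !big_cons; congr (_ + _); last by apply: IH => y hy; apply: Hs; right.
rewrite /=.
rewrite (FF_concat tS' tP tu) /=; last by apply: Hs; left.
ring.
Qed.
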